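(* Let $M$ and $M+H$ be $n\times n$ real symmetric matrices, each of whose eigenvalues have pairwise distinct absolute values. Let $\lambda_1,\dots,\lambda_n$ be the spectrum of $M$ with $|\lambda_1|>\dots>|\lambda_n|$, and $\nu_1,\dots,\nu_n$ the spectrum of $M+H$ with $|\nu_1|>\dots>|\nu_n|$. For each $i$ let $u_i,v_i$ be eigenvectors with $Mu_i=\lambda_iu_i$ and $(M+H)v_i=\nu_iv_i$, and let $\theta_i$ be the angle between the lines spanned by $u_i$ and $v_i$. Let $\varepsilon:=\|H\|$ be the spectral norm of $H$. Then for all $i\in\{1,\dots,n\}$: (i) $|\lambda_i^2-\nu_i^2|\le\varepsilon(\varepsilon+2|\lambda_1|)$; (ii) $\sin\theta_i\le\varepsilon(\varepsilon+2|\lambda_1|)/\Delta_i$, where $\Delta_i=\min\{|\lambda_i^2-\nu_j^2|: j=1,\dots,n,\ j\ne i\}$.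
   Context: The spectral norm $\|H\|$ of a real symmetric matrix is the maximal absolute value of its eigenvalues. *)

(* Defs.v *)
From HB Require Import structures.
From mathcomp Require Import all_boot all_order all_algebra.
From mathcomp.real_closed Require Import polyrcf.
Set Implicit Arguments. Unset Strict Implicit. Unset Printing Implicit Defensive.
Import Order.TTheory GRing.Theory Num.Theory.
Local Open Scope ring_scope.

Definition dotv (R : rcfType) (n : nat) (u v : 'cV[R]_n) : R := (u^T *m v) 0 0.

(* sine of the angle theta in [0, pi/2] between the lines spanned by nonzero
   u and v: cos theta = |<u,v>| / (|u| |v|), sin theta = sqrt (1 - cos^2). *)
Definition sin_angle (R : rcfType) (n : nat) (u v : 'cV[R]_n) : R :=
  Num.sqrt (1 - (dotv u v) ^+ 2 / (dotv u u * dotv v v)).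

(* spectral norm: maximal absolute value of the eigenvalues (real roots of the
   characteristic polynomial; for a symmetric matrix these are all eigenvalues) *)
Definition spectral_norm (R : rcfType) (n : nat) (H : 'M[R]_n) : R :=
  \big[Num.max/0]_(x <- rootsR (char_poly H)) `|x|.

(* Delta_i = min { |lam_i^2 - nu_j^2| : j <> i }.  The neutral element of the
   min is an upper bound of all the values, so for n >= 2 this is exactly the
   minimum over j <> i. *)
Definition gap (R : rcfType) (n : nat) (lam nu : 'I_n -> R) (i : 'I_n) : R :=
  \big[Num.min/(\big[Num.max/0]_(j < n) `|lam i ^+ 2 - nu j ^+ 2|)]_(j < n | j != i)
     `|lam i ^+ 2 - nu j ^+ 2|.

(* Main.v *)
Require Import Defs.
From HB Require Import structures.
From mathcomp Require Import all_boot all_order all_algebra.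
From mathcomp.real_closed Require Import polyrcf complex.
From mathcomp Require Import sesquilinear spectral.
From mathcomp Require Import ring lra.
Import Order.TTheory GRing.Theory Num.Theory.
Local Open Scope ring_scope.
Set Implicit Arguments. Unset Strict Implicit. Unset Printing Implicit Defensive.

Section Dot.
Variables (R : rcfType) (n : nat).
Implicit Types (x y z : 'cV[R]_n) (A B : 'M[R]_n).

Lemma dotE x y : dotv x y = \sum_k x k 0 * y k 0.
Proof. by rewrite /dotv mxE; apply: eq_bigr => k _; rewrite mxE. Qed.

Lemma dotC x y : dotv x y = dotv y x.
Proof. by rewrite !dotE; apply: eq_bigr => k _; rewrite mulrC. Qed.

Lemma dotDr x y z : dotv x (y + z) = dotv x y + dotv x z.
Proof. by rewrite !dotE -big_split; apply: eq_bigr => k _; rewrite mxE mulrDr. Qed.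

Lemma dotZr a x y : dotv x (a *: y) = a * dotv x y.
Proof. by rewrite !dotE mulr_sumr; apply: eq_bigr => k _; rewrite mxE mulrCA. Qed.

Lemma dotNr x y : dotv x (- y) = - dotv x y.
Proof. by rewrite -scaleN1r dotZr mulN1r. Qed.

Lemma dotBr x y z : dotv x (y - z) = dotv x y - dotv x z.
Proof. by rewrite dotDr dotNr. Qed.

Lemma dot0r x : dotv x 0 = 0.
Proof. by rewrite -(scale0r 0) dotZr mul0r. Qed.

Lemma dotsumr I (r : seq I) (P : pred I) (F : I -> 'cV[R]_n) x :
  dotv x (\sum_(j <- r | P j) F j) = \sum_(j <- r | P j) dotv x (F j).
Proof.
elim/big_rec2: _ => [|j s1 s2 _ <-]; first by rewrite dot0r.
by rewrite dotDr.
Qed.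

Lemma dotDl x y z : dotv (y + z) x = dotv y x + dotv z x.
Proof. by rewrite dotC dotDr !(dotC x). Qed.
Lemma dotZl a x y : dotv (a *: y) x = a * dotv y x.
Proof. by rewrite dotC dotZr dotC. Qed.
Lemma dotNl x y : dotv (- y) x = - dotv y x.
Proof. by rewrite dotC dotNr dotC. Qed.
Lemma dotBl x y z : dotv (y - z) x = dotv y x - dotv z x.
Proof. by rewrite dotDl dotNl. Qed.
Lemma dotsuml I (r : seq I) (P : pred I) (F : I -> 'cV[R]_n) x :
  dotv (\sum_(j <- r | P j) F j) x = \sum_(j <- r | P j) dotv (F j) x.
Proof. by rewrite dotC dotsumr; apply: eq_bigr => j _; rewrite dotC. Qed.

Lemma dotM A x y : dotv x (A *m y) = dotv (A^T *m x) y.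
Proof. by rewrite /dotv trmx_mul trmxK mulmxA. Qed.

Lemma dotsym A x y : A^T = A -> dotv x (A *m y) = dotv (A *m x) y.
Proof. by move=> sA; rewrite dotM sA. Qed.

Lemma dot_ge0 x : 0 <= dotv x x.
Proof. by rewrite dotE sumr_ge0 // => k _; rewrite -expr2 sqr_ge0. Qed.

Lemma dot_gt0 x : x != 0 -> 0 < dotv x x.
Proof.
move=> x0; rewrite lt_def dot_ge0 andbT; apply: contra x0 => /eqP.
rewrite dotE => /eqP; rewrite psumr_eq0 => [/allP H|k _]; last by rewrite -expr2 sqr_ge0.
apply/eqP/matrixP => k j; rewrite ord1 !mxE.
by have /(_ (mem_index_enum k)) := H k; rewrite implyTb mulf_eq0 orbb => /eqP.
Qed.

Lemma dot_eq0 x : (dotv x x == 0) = (x == 0).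
Proof.
apply/idP/idP => [/eqP h|/eqP ->]; last by rewrite dot0r.
by apply: contraLR isT => /dot_gt0; rewrite h ltxx.
Qed.

Lemma CS x y : dotv x y ^+ 2 <= dotv x x * dotv y y.
Proof.
have [->|x0] := eqVneq x 0; first by rewrite dotC !dot0r expr0n mul0r.
set a := dotv x x; set b := dotv x y; set c := dotv y y.
have a0 : 0 < a by apply: dot_gt0.
have := dot_ge0 (b *: x - a *: y).
rewrite dotBl !dotBr !dotZl !dotZr -/a -/b -/c (dotC y x) -/b => h.
have : 0 <= a * (a * c - b ^+ 2).
  by move: h; congr (_ <= _); ring.
rewrite pmulr_rge0 // subr_ge0 => h2; exact h2.
Qed.

End Dot.
Section Basis.
Variables (R : rcfType) (n : nat) (p : 'I_n -> 'cV[R]_n).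
Hypothesis hp0 : forall j, p j != 0.
Hypothesis hpo : forall j k, j != k -> dotv (p j) (p k) = 0.

Lemma dot_sum_basis (w : 'I_n -> R) k :
  dotv (p k) (\sum_j w j *: p j) = w k * dotv (p k) (p k).
Proof.
rewrite dotsumr (bigD1 k) //= big1 ?addr0 ?dotZr // => j jk.
by rewrite dotZr hpo 1?eq_sym // mulr0.
Qed.

Let P : 'M[R]_n := \matrix_(j, k) p j k 0.

Lemma basis_unit : P \in unitmx.
Proof.
rewrite -row_free_unit; apply/inj_row_free => w /rowP wP.
apply/rowP => k; rewrite mxE.
have : dotv (p k) (\sum_j w 0 j *: p j) = 0.
  suff -> : \sum_j w 0 j *: p j = 0 by rewrite dot0r.
  apply/matrixP => a b; rewrite ord1 summxE.
  transitivity ((w *m P) 0 a); last by rewrite (wP a) !mxE.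
  by rewrite !mxE; apply: eq_bigr => j _; rewrite !mxE.
rewrite (dot_sum_basis (fun j => w 0 j)) => /eqP; rewrite mulf_eq0 dot_eq0 (negbTE (hp0 k)) orbF.
by move/eqP.
Qed.

Lemma basis_span y : exists w : 'I_n -> R, y = \sum_j w j *: p j.
Proof.
pose w := y^T *m invmx P.
have hw : w *m P = y^T by rewrite mulmxKV // basis_unit.
exists (fun j => w 0 j); apply/matrixP => a b; rewrite ord1 summxE.
have -> : y a 0 = (w *m P) 0 a by rewrite hw !mxE.
by rewrite !mxE; apply: eq_bigr => j _; rewrite !mxE.
Qed.

Lemma basis_expand y : y = \sum_j (dotv (p j) y / dotv (p j) (p j)) *: p j.
Proof.
have [w ->] := basis_span y; apply: eq_bigr => j _; congr (_ *: _).
by rewrite dot_sum_basis mulfK // dot_eq0 hp0.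
Qed.

Lemma parseval x y :
  dotv x y = \sum_j dotv (p j) x * dotv (p j) y / dotv (p j) (p j).
Proof.
rewrite {1}(basis_expand x) dotsuml; apply: eq_bigr => j _.
by rewrite dotZl dotC mulrAC.
Qed.

End Basis.
Lemma sq_le (R : rcfType) (p q : R) : 0 <= q -> p ^+ 2 <= q ^+ 2 -> `|p| <= q.
Proof.
move=> q0 h; rewrite -(@ler_pXn2r _ 2) // ?nnegrE ?normr_ge0 //.
by rewrite real_normK ?num_real.
Qed.

Section Bnd.
Variables (R : rcfType) (n : nat).
Implicit Types (x y z : 'cV[R]_n) (A B : 'M[R]_n).

Definition bnd A (c : R) := forall x, dotv (A *m x) (A *m x) <= c ^+ 2 * dotv x x.

Lemma dot_le_bnd A B a b x : 0 <= a -> 0 <= b -> bnd A a -> bnd B b ->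
  `|dotv (A *m x) (B *m x)| <= a * b * dotv x x.
Proof.
move=> a0 b0 hA hB; apply: sq_le; first by rewrite !mulr_ge0 ?dot_ge0.
apply: le_trans (CS _ _) _.
have -> : (a * b * dotv x x) ^+ 2 = (a ^+ 2 * dotv x x) * (b ^+ 2 * dotv x x) by ring.
by apply: ler_pM => //; rewrite dot_ge0.
Qed.

Lemma bnd_add A B a b : 0 <= a -> 0 <= b -> bnd A a -> bnd B b -> bnd (A + B) (a + b).
Proof.
move=> a0 b0 hA hB x; rewrite mulmxDl dotDl !dotDr (dotC (B *m x)).
have h1 := hA x; have h2 := hB x.
have h3 := dot_le_bnd x a0 b0 hA hB.
have h4 : dotv (A *m x) (B *m x) <= a * b * dotv x x by apply: le_trans (ler_norm _) h3.
have -> : (a + b) ^+ 2 * dotv x x = a ^+ 2 * dotv x x + 2 * (a * b * dotv x x) + b ^+ 2 * dotv x x by ring.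
lra.
Qed.

Lemma bnd_mul A B a b : bnd A a -> bnd B b -> bnd (A *m B) (a * b).
Proof.
move=> hA hB x; rewrite -mulmxA; apply: le_trans (hA _) _.
have E : (a * b) ^+ 2 * dotv x x = a ^+ 2 * (b ^+ 2 * dotv x x) by ring.
by rewrite E; apply: ler_wpM2l; [exact: sqr_ge0|exact: hB].
Qed.

Lemma bnd_quad A c x : 0 <= c -> bnd A c -> `|dotv x (A *m x)| <= c * dotv x x.
Proof.
move=> c0 hA; apply: sq_le; first by rewrite mulr_ge0 ?dot_ge0.
apply: le_trans (CS _ _) _.
have -> : (c * dotv x x) ^+ 2 = dotv x x * (c ^+ 2 * dotv x x) by ring.
by apply: ler_wpM2l; rewrite ?dot_ge0.
Qed.

End Bnd.

Lemma eig_orth (R : rcfType) (n : nat) (S : 'M[R]_n) a b (x y : 'cV[R]_n) :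
  S^T = S -> S *m x = a *: x -> S *m y = b *: y -> a != b -> dotv x y = 0.
Proof.
move=> sS hx hy ab.
have : a * dotv x y = b * dotv x y.
  by rewrite -dotZl -hx -dotsym // hy dotZr.
move/eqP; rewrite -subr_eq0 -mulrBl mulf_eq0 subr_eq0 (negbTE ab) /=.
by move/eqP.
Qed.

Section Eig.
Variables (R : rcfType) (n : nat) (S : 'M[R]_n) (p : 'I_n -> 'cV[R]_n) (l : 'I_n -> R).
Hypothesis hp0 : forall j, p j != 0.
Hypothesis hpo : forall j k, j != k -> dotv (p j) (p k) = 0.
Hypothesis sS : S^T = S.
Hypothesis hSp : forall j, S *m p j = l j *: p j.

Lemma dot_eigS j x : dotv (p j) (S *m x) = l j * dotv (p j) x.
Proof. by rewrite dotsym // hSp dotZl. Qed.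

Lemma quad_eig x y :
  dotv x (S *m y) = \sum_j l j * (dotv (p j) x * dotv (p j) y / dotv (p j) (p j)).
Proof.
rewrite (parseval hp0 hpo); apply: eq_bigr => j _.
by rewrite dot_eigS; ring.
Qed.

Lemma quad_le x t : (forall j, dotv (p j) x != 0 -> l j <= t) ->
  dotv x (S *m x) <= t * dotv x x.
Proof.
move=> h; rewrite quad_eig (parseval hp0 hpo x x) mulr_sumr.
apply: ler_sum => j _.
have [e0|ne0] := eqVneq (dotv (p j) x) 0; first by rewrite e0 !mul0r !mulr0.
apply: ler_wpM2r; last exact: h.
by rewrite -expr2 mulr_ge0 ?sqr_ge0 // invr_ge0 dot_ge0.
Qed.

Lemma quad_ge x t : (forall j, dotv (p j) x != 0 -> t <= l j) ->
  t * dotv x x <= dotv x (S *m x).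
Proof.
move=> h; rewrite quad_eig (parseval hp0 hpo x x) mulr_sumr.
apply: ler_sum => j _.
have [e0|ne0] := eqVneq (dotv (p j) x) 0; first by rewrite e0 !mul0r !mulr0.
apply: ler_wpM2r; last exact: h.
by rewrite -expr2 mulr_ge0 ?sqr_ge0 // invr_ge0 dot_ge0.
Qed.

Lemma bnd_eig c : 0 <= c -> (forall j, `|l j| <= c) -> bnd S c.
Proof.
move=> c0 hl x; rewrite (parseval hp0 hpo) (parseval hp0 hpo x x) mulr_sumr.
apply: ler_sum => j _; rewrite !dot_eigS.
have -> : l j * dotv (p j) x * (l j * dotv (p j) x) / dotv (p j) (p j)
  = l j ^+ 2 * (dotv (p j) x * dotv (p j) x / dotv (p j) (p j)) by ring.
apply: ler_wpM2r.
  by rewrite -expr2 mulr_ge0 ?sqr_ge0 // invr_ge0 dot_ge0.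
by rewrite -real_normK ?num_real // ler_pXn2r ?nnegrE ?normr_ge0.
Qed.

End Eig.

Lemma weyl (R : rcfType) (n : nat) (S T : 'M[R]_n) (p q : 'I_n -> 'cV[R]_n)
  (a b : 'I_n -> R) (c : R) (i : 'I_n) :
  (forall j, p j != 0) -> (forall j k, j != k -> dotv (p j) (p k) = 0) ->
  S^T = S -> (forall j, S *m p j = a j *: p j) ->
  (forall j, q j != 0) -> (forall j k, j != k -> dotv (q j) (q k) = 0) ->
  T^T = T -> (forall j, T *m q j = b j *: q j) ->
  (forall j k : 'I_n, (j <= k)%N -> a k <= a j) ->
  (forall j k : 'I_n, (j <= k)%N -> b k <= b j) ->
  (forall x, `|dotv x (T *m x) - dotv x (S *m x)| <= c * dotv x x) ->
  b i <= a i + c.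
Proof.
move=> hp0 hpo sS hSp hq0 hqo sT hTq ha hb hc.
pose wk := widen_ord (ltn_ord i).
pose wl := widen_ord (ltnW (ltn_ord i)).
pose Y : 'M[R]_(i.+1, i) := \matrix_(k, l) dotv (p (wl l)) (q (wk k)).
have nf : ~~ row_free Y.
  rewrite /row_free; apply/negP => /eqP h; have := rank_leq_col Y.
  by rewrite h ltnn.
have kY : kermx Y != 0 by rewrite kermx_eq0.
have [r hr] : exists r, row r (kermx Y) != 0.
  apply/existsP; apply: contraNT kY => /existsPn h.
  apply/eqP/row_matrixP => r; rewrite row0; exact/eqP/negPn/h.
set w := row r (kermx Y) in hr.
have hw : w *m Y = 0 by rewrite -row_mul mulmx_ker row0.
pose x := \sum_k w 0 k *: q (wk k).
have wk_inj : injective wk by move=> k1 k2 /(congr1 val) /= /val_inj.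
have hx0 : x != 0.
  have [k0 hk0] : exists k0, w 0 k0 != 0.
    apply/existsP; apply: contraNT hr => /existsPn h.
    apply/eqP/rowP => k; rewrite [in RHS]mxE; exact/eqP/negPn/h.
  apply: contraNneq hk0 => x0.
  have : dotv (q (wk k0)) x = w 0 k0 * dotv (q (wk k0)) (q (wk k0)).
    rewrite dotsumr (bigD1 k0) //= big1 ?addr0 ?dotZr // => k kk0.
    by rewrite dotZr hqo ?mulr0 // (inj_eq wk_inj) eq_sym.
  rewrite x0 dot0r => /esym/eqP; rewrite mulf_eq0 dot_eq0 (negbTE (hq0 _)) orbF.
  by [].
have Hp : forall j : 'I_n, (j < i)%N -> dotv (p j) x = 0.
  move=> j ji; have -> : j = wl (Ordinal ji) by apply: val_inj.
  transitivity ((w *m Y) 0 (Ordinal ji)); last by rewrite hw mxE.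
  rewrite mxE dotsumr; apply: eq_bigr => k _; by rewrite dotZr /Y !mxE.
have Hq : forall j : 'I_n, (i < j)%N -> dotv (q j) x = 0.
  move=> j ij; rewrite dotsumr big1 // => k _; rewrite dotZr hqo ?mulr0 //.
  apply/eqP => /(congr1 val) /= jk; move: (ltn_ord k); rewrite -jk ltnS.
  by rewrite leqNgt ij.
have h1 : dotv x (S *m x) <= a i * dotv x x.
  apply: (quad_le hp0 hpo sS hSp) => j hj; apply: ha; rewrite leqNgt.
  by apply: contra hj => ji; apply/eqP/Hp.
have h2 : b i * dotv x x <= dotv x (T *m x).
  apply: (quad_ge hq0 hqo sT hTq) => j hj; apply: hb; rewrite leqNgt.
  by apply: contra hj => ij; apply/eqP/Hq.
have h3 := hc x.
have hD : 0 < dotv x x by apply: dot_gt0.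
have h4 : b i * dotv x x <= (a i + c) * dotv x x.
  move: h3; rewrite ler_norml => /andP[_ h3]; rewrite mulrDl; lra.
by rewrite -(ler_pM2r hD).
Qed.
Section Cplx.
Variable R : rcfType.
Local Notation C := (R[i]).
Local Notation phi := (real_complex R).

Lemma phi_real (r : R) : phi r \is Num.real.
Proof. by apply/complex_realP; exists r. Qed.

Lemma conj_phi (r : R) : Num.conj (phi r) = phi r.
Proof. exact/conj_Creal/phi_real. Qed.

Lemma norm_phi (r : R) : `|phi r| = phi `|r|.
Proof. by rewrite normc_def /= expr0n addr0 sqrtr_sqr. Qed.

Lemma le_phi (a b : R) : (phi a <= phi b) = (a <= b).
Proof. exact: lecR. Qed.

Lemma phiM (a b : R) : phi (a * b) = phi a * phi b.
Proof. exact: rmorphM. Qed.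

Lemma phiX (a : R) k : phi (a ^+ k) = phi a ^+ k.
Proof. exact: rmorphXn. Qed.

Definition Qc n (z : 'cV[C]_n) : C := ((map_mx Num.conj z)^T *m z) 0 0.

Lemma QcE n (z : 'cV[C]_n) : Qc z = \sum_k `|z k 0| ^+ 2.
Proof.
rewrite /Qc mxE; apply: eq_bigr => k _; by rewrite !mxE normCKC.
Qed.

Lemma Qc_phi n (x : 'cV[R]_n) : Qc (map_mx phi x) = phi (dotv x x).
Proof.
rewrite /Qc /dotv.
have -> : map_mx Num.conj (map_mx phi x) = map_mx phi x.
  by apply/matrixP => a b; rewrite !mxE conj_phi.
by rewrite map_trmx -map_mxM mxE.
Qed.

Lemma QcM n (A : 'M[C]_n) z : (map_mx Num.conj A)^T *m A = 1%:M -> Qc (A *m z) = Qc z.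
Proof.
move=> hA; rewrite /Qc map_mxM trmx_mul -mulmxA (mulmxA _ A) hA mul1mx //.
Qed.


Lemma eig_bound (n : nat) (H : 'M[R]_n) (r : R) :
  eigenvalue (map_mx phi H) (phi r) -> `|r| <= spectral_norm H.
Proof.
rewrite eigenvalue_map eigenvalue_root_char => hr.
have hp : char_poly H != 0 by apply: monic_neq0; apply: char_poly_monic.
have hin : r \in rootsR (char_poly H).
  by rewrite -(roots_on_rootsR hp) hr andbT.
rewrite /spectral_norm; exact: (le_bigmax_seq _ _ xpredT (fun x => `|x|) hin isT).
Qed.

Lemma bnd_spectral (n : nat) (H : 'M[R]_n) : H^T = H -> bnd H (spectral_norm H).
Proof.
move=> sH x.
set e := spectral_norm H.
pose Hc := map_mx phi H.
have hHc : Hc \is hermsymmx.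
  apply/is_hermitianmxP; rewrite expr0 scale1r.
  apply/matrixP => a b; rewrite !mxE conj_phi.
  by rewrite -[in LHS]sH mxE.
pose P := spectralmx Hc; pose d := spectral_diag Hc.
have PU : P \is unitarymx by apply: spectral_unitarymx.
have Pu : P \in unitmx by apply: unitarymx_unit.
have eH : Hc = invmx P *m diag_mx d *m P.
  exact/orthomx_spectralP/hermitian_normalmx.
have iP : invmx P = (map_mx Num.conj P)^T.
  by rewrite invmx_unitary // map_trmx.
have PPt : P *m (map_mx Num.conj P)^T = 1%:M.
  by rewrite -iP mulmxV.
have PtP : (map_mx Num.conj P)^T *m P = 1%:M.
  by rewrite -iP mulVmx.
have dreal : d \is a realmx by apply: hermitian_spectral_diag_real.
have hd : forall k, `|d 0 k| <= phi e.
  move=> k; have : d 0 k \is Num.real by apply: (mxOverP dreal).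
  case/complex_realP => r hr; rewrite hr norm_phi le_phi; apply: eig_bound.
  rewrite -hr; apply/eigenvalueP; exists (row k P).
    have -> : row k P *m Hc = row k (P *m Hc) by rewrite row_mul.
    rewrite eH !mulmxA mulmxV // mul1mx mul_diag_mx.
    by apply/rowP => j; rewrite !mxE.
  apply/eqP => h0; have := congr1 (mulmx^~ (map_mx Num.conj P)^T) h0.
  rewrite -row_mul PPt mul0mx => /rowP /(_ k); rewrite !mxE eqxx /=.
  by move/eqP; rewrite oner_eq0.
rewrite -le_phi phiM -!Qc_phi map_mxM.
pose y := P *m map_mx phi x.
have -> : Hc *m map_mx phi x = (map_mx Num.conj P)^T *m (diag_mx d *m y).
  by rewrite eH -iP !mulmxA.
rewrite QcM; last first.
  have -> : (map_mx Num.conj ((map_mx Num.conj P)^T))^T = P.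
    by apply/matrixP => a b; rewrite !mxE conjCK.
  exact: PPt.
have -> : Qc (map_mx phi x) = Qc y by rewrite /y QcM.
rewrite !QcE mulr_sumr; apply: ler_sum => k _.
rewrite mul_diag_mx mxE normrM exprMn phiX.
apply: ler_wpM2r; first exact: exprn_ge0.
have e0 : 0 <= phi e by apply: le_trans (hd k).
by rewrite ler_pXn2r ?nnegrE ?normr_ge0.
Qed.
End Cplx.

Section Aux.
Variables (R : rcfType) (n : nat) (f : 'I_n -> R).
Hypothesis hf : forall i j : 'I_n, (i < j)%N -> `|f j| < `|f i|.

Lemma abs_inj (j k : 'I_n) : j != k -> f j != f k.
Proof.
move=> jk; apply/eqP => e.
have [h|h|h] := ltngtP j k.
- by have := hf h; rewrite e ltxx.
- by have := hf h; rewrite e ltxx.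
- by move/eqP: jk; apply; apply: val_inj.
Qed.

Lemma abs_mono (j k : 'I_n) : (j <= k)%N -> `|f k| <= `|f j|.
Proof.
rewrite leq_eqVlt => /orP[/eqP e|h]; last exact/ltW/hf.
by have -> : j = k by apply: val_inj.
Qed.

Lemma sq_mono (j k : 'I_n) : (j <= k)%N -> f k ^+ 2 <= f j ^+ 2.
Proof.
move=> h; rewrite -(real_normK (num_real (f k))) -(real_normK (num_real (f j))).
rewrite ler_pXn2r ?nnegrE ?normr_ge0 //.
exact: abs_mono.
Qed.

End Aux.

Lemma spectral_norm_ge0 (R : rcfType) n (H : 'M[R]_n) : 0 <= spectral_norm H.
Proof.
rewrite /spectral_norm; elim/big_rec: _ => // y s _ hs.
by rewrite le_max hs orbT.
Qed.

Unset Implicit Arguments.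
Set Strict Implicit.

Theorem theorem5p9 (R : rcfType) (n : nat) (M H : 'M[R]_n)
    (lam nu : 'I_n -> R) (u v : 'I_n -> 'cV[R]_n) :
  M^T = M -> (M + H)^T = M + H ->
  (* lam is the spectrum of M, nu the spectrum of M + H (with multiplicity) *)
  char_poly M = \prod_(i < n) ('X - (lam i)%:P) ->
  char_poly (M + H) = \prod_(i < n) ('X - (nu i)%:P) ->
  (* |lam_1| > ... > |lam_n| and |nu_1| > ... > |nu_n| *)
  (forall i j : 'I_n, (i < j)%N -> `|lam j| < `|lam i|) ->
  (forall i j : 'I_n, (i < j)%N -> `|nu j| < `|nu i|) ->
  (* eigenvectors *)
  (forall i, u i != 0 /\ M *m u i = lam i *: u i) ->
  (forall i, v i != 0 /\ (M + H) *m v i = nu i *: v i) ->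
  forall i : 'I_n,
    let eps := spectral_norm H in
    let lam1 := lam (Ordinal (leq_ltn_trans (leq0n i) (ltn_ord i))) in
    `|lam i ^+ 2 - nu i ^+ 2| <= eps * (eps + 2 * `|lam1|) /\
    (0 < gap lam nu i ->
       sin_angle (u i) (v i) <= eps * (eps + 2 * `|lam1|) / gap lam nu i).
Proof.
move=> sM sMH _ _ hl hn hu hv i eps lam1.
set c := eps * (eps + 2 * `|lam1|).
have sH : H^T = H.
  by apply: (addrI M); rewrite -[in LHS]sM -sMH; apply/matrixP => r s; rewrite !mxE.
pose a j := lam j ^+ 2; pose b j := nu j ^+ 2.
pose A := M *m M; pose B := (M + H) *m (M + H).
have sA : A^T = A by rewrite /A trmx_mul sM.
have sB : B^T = B by rewrite /B trmx_mul sMH.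
have hu0 : forall j, u j != 0 by move=> j; case: (hu j).
have hv0 : forall j, v j != 0 by move=> j; case: (hv j).
have hMu : forall j, M *m u j = lam j *: u j by move=> j; case: (hu j).
have hMHv : forall j, (M + H) *m v j = nu j *: v j by move=> j; case: (hv j).
have hAu : forall j, A *m u j = a j *: u j.
  by move=> j; rewrite /A -mulmxA hMu -scalemxAr hMu scalerA.
have hBv : forall j, B *m v j = b j *: v j.
  by move=> j; rewrite /B -mulmxA hMHv -scalemxAr hMHv scalerA.
have huo : forall j k, j != k -> dotv (u j) (u k) = 0.
  move=> j k jk; apply: (eig_orth sM (hMu j) (hMu k)); exact: abs_inj.
have hvo : forall j k, j != k -> dotv (v j) (v k) = 0.
  move=> j k jk; apply: (eig_orth sMH (hMHv j) (hMHv k)); exact: abs_inj.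
have eps0 : 0 <= eps by apply: spectral_norm_ge0.
set rho := `|lam1|.
have rho0 : 0 <= rho by apply: normr_ge0.
have bM : bnd M rho.
  apply: (bnd_eig hu0 huo sM hMu rho0) => j; apply: (abs_mono hl); exact: leq0n.
have bH : bnd H eps by apply: bnd_spectral.
have eE : B - A = M *m H + H *m M + H *m H.
  rewrite /A /B mulmxDl !mulmxDr.
  by rewrite addrAC [M *m M + _]addrC addrK addrA.
have bE : bnd (B - A) c.
  have -> : c = rho * eps + eps * rho + eps * eps.
    rewrite /c /rho; ring.
  rewrite eE; apply: bnd_add.
  - by rewrite addr_ge0 // mulr_ge0.
  - by rewrite mulr_ge0.
  - apply: bnd_add; [by rewrite mulr_ge0|by rewrite mulr_ge0|exact: bnd_mul|exact: bnd_mul].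
  - exact: bnd_mul.
have c0 : 0 <= c by rewrite /c mulr_ge0 // addr_ge0 // mulr_ge0.
have hq : forall x, `|dotv x (B *m x) - dotv x (A *m x)| <= c * dotv x x.
  by move=> x; rewrite -dotBr -mulmxBl; apply: bnd_quad.
have am : forall j k : 'I_n, (j <= k)%N -> a k <= a j by move=> j k; apply: sq_mono.
have bm : forall j k : 'I_n, (j <= k)%N -> b k <= b j by move=> j k; apply: sq_mono.
split.
  have w1 := weyl i hu0 huo sA hAu hv0 hvo sB hBv am bm hq.
  have w2 : a i <= b i + c.
    apply: (weyl i hv0 hvo sB hBv hu0 huo sA hAu bm am) => x.
    by rewrite distrC; apply: hq.
  rewrite /a /b in w1 w2; rewrite ler_norml; apply/andP; split; lra.
move=> gp; set D := gap lam nu i in gp *.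
set ui := u i.
pose t j := dotv (v j) ui ^+ 2 / dotv (v j) (v j).
have t0 : forall j, 0 <= t j.
  by move=> j; rewrite /t divr_ge0 ?sqr_ge0 ?dot_ge0.
have hU : dotv ui ui = \sum_j t j.
  by rewrite (parseval hv0 hvo); apply: eq_bigr => j _; rewrite /t expr2.
have hEu : dotv ((B - A) *m ui) ((B - A) *m ui) = \sum_j (b j - a i) ^+ 2 * t j.
  have -> : (B - A) *m ui = B *m ui - a i *: ui by rewrite mulmxBl hAu.
  rewrite (parseval hv0 hvo); apply: eq_bigr => j _.
  rewrite dotBr dotZr (dot_eigS sB hBv) /t; ring.
have hle := bE ui; rewrite hEu in hle.
have hgap : forall j, j != i -> D ^+ 2 <= (b j - a i) ^+ 2.
  move=> j ji.
  have hD : D <= `|lam i ^+ 2 - nu j ^+ 2| by apply: bigmin_le_cond.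
  rewrite -(real_normK (num_real (b j - a i))) distrC ler_pXn2r ?nnegrE ?normr_ge0 //.
  exact: ltW.
have hsum : D ^+ 2 * (dotv ui ui - t i) <= \sum_j (b j - a i) ^+ 2 * t j.
  rewrite hU (bigD1 i) //= [t i + _]addrC addrK [X in _ <= X](bigD1 i) //=.
  rewrite -[X in X <= _]add0r; apply: lerD; first by rewrite mulr_ge0 ?sqr_ge0.
  rewrite mulr_sumr; apply: ler_sum => j ji; apply: ler_wpM2r => //.
  exact: hgap.
have U0 : 0 < dotv ui ui by apply: dot_gt0; apply: hu0.
have V0 : 0 < dotv (v i) (v i) by apply: dot_gt0; apply: hv0.
have D0 : 0 < D ^+ 2 by apply: exprn_gt0.
have key : 1 - dotv ui (v i) ^+ 2 / (dotv ui ui * dotv (v i) (v i))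
         = (dotv ui ui - t i) / dotv ui ui.
  rewrite /t dotC; field.
  by rewrite (gt_eqF U0) (gt_eqF V0).
rewrite /sin_angle -/ui key.
have cD : 0 <= c / D by rewrite divr_ge0 // ltW.
rewrite -(ger0_norm cD) -sqrtr_sqr ler_sqrt; last exact: sqr_ge0.
rewrite ler_pdivrMr // expr_div_n mulrAC ler_pdivlMr //.
rewrite mulrC; apply: le_trans hsum _; apply: le_trans hle _.
by rewrite mulrC.
Qed.
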